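(* For all integers $a\ge1$, $b\ge2$ and every positive integer $t$, $$i((1,1,a,b),t)+i((1,1,b-1,a+1),t)=(t+2)\,F(a+1,b,0,t).$$
   Context: For $S,T\subseteq[n]$, write $T\le S$ if $|T|=|S|$ and the $i$-th smallest element of $T$ is at most the $i$-th smallest element of $S$ for each $i$. The Schubert matroid $\mathrm{SM}_n(S)$ is the matroid on $[n]$ with bases $\{T\subseteq[n]:T\le S\}$; $i(M,t)$ is the number of lattice points in the $t$-th dilate of the matroid polytope $\mathrm{conv}\{\sum_{b\in B}e_b: B\text{ a basis of }M\}$. For a sequence $r=(r_1,\dots,r_{2m})$ of integers with $r_1\ge0$, $r_i>0$ for $i\ge2$, let $n=\sum r_i$ and let $S\subseteq[n]$ have indicator vector $(0^{r_1},1^{r_2},\dots,0^{r_{2m-1}},1^{r_{2m}})$ ($x^p$ = $p$ consecutive copies of $x$); $i(r,t):=i(\mathrm{SM}_n(S),t)$. For integers $a,b\ge0$ with $a+b\ge1$, $c\in\mathbb Z$, $t\ge0$: $F(a,b,c,t)=\sum_{j=0}^{a+b}(-1)^j\binom{a+b}{j}\binom{(t+1)(b-j)+a+c-1}{a+b-1}$, with $\binom00=1$ and $\binom NK=0$ if $K<0$ or $N<K$. *)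

(* Defs.v *)
From HB Require Import structures.
From mathcomp Require Import all_boot all_order all_algebra.
From mathcomp Require Import boolp reals Rstruct.
Set Implicit Arguments. Unset Strict Implicit. Unset Printing Implicit Defensive.
Import Order.TTheory GRing.Theory Num.Theory.

Local Open Scope ring_scope.

(* Ground set [n] is modelled by 'I_n (0-based, order preserving shift). *)

Definition sorted_elems (n : nat) (T : {set 'I_n}) : seq nat :=
  sort leq [seq val i | i <- enum T].

Definition gale_le (n : nat) (T S : {set 'I_n}) : bool :=
  (#|T| == #|S|)%N && all2 leq (sorted_elems T) (sorted_elems S).

Definition schubert_basis (n : nat) (S : {set 'I_n}) (B : {set 'I_n}) : bool :=
  gale_le B S.

Definition in_dilate (n : nat) (isB : {set 'I_n} -> bool) (t : nat)
    (x : 'I_n -> nat) : Prop :=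
  exists lam : {set 'I_n} -> Rdefinitions.R,
    (forall B, 0 <= lam B) /\
    (forall B, ~~ isB B -> lam B = 0) /\
    (\sum_(B : {set 'I_n}) lam B = 1) /\
    (forall j : 'I_n,
        (x j)%:R = t%:R * \sum_(B : {set 'I_n} | isB B) lam B * (j \in B)%:R).

(* Every such lattice point has coordinates in {0,...,t} (the polytope lies in
   [0,1]^n), so counting inside the box {0..t}^n counts all of them. *)
Definition ehrhart_count (n : nat) (isB : {set 'I_n} -> bool) (t : nat) : nat :=
  #|[set x : {ffun 'I_n -> 'I_t.+1} |
       `[< in_dilate isB t (fun j => nat_of_ord (x j)) >] ]|.

Definition i_schubert (n : nat) (S : {set 'I_n}) (t : nat) : nat :=
  ehrhart_count (schubert_basis S) t.

(* The indicator word (0^{r_1},1^{r_2},...,0^{r_{2m-1}},1^{r_{2m}}). *)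
Definition r_word (r : seq nat) : seq bool :=
  flatten [seq nseq (nth 0%N r k) (odd k) | k <- iota 0 (size r)].

Definition r_set (r : seq nat) : {set 'I_(sumn r)} :=
  [set i : 'I_(sumn r) | nth false (r_word r) i].

Definition i_r (r : seq nat) (t : nat) : nat := i_schubert (r_set r) t.

Definition binomZ (N K : int) : int :=
  if (K < 0) || (N < K) then 0 else ('C(`|N|%N, `|K|%N))%:Z.

Definition F (a b : nat) (c : int) (t : nat) : int :=
  \sum_(j < (a + b).+1)
     (-1) ^+ j * ('C(a + b, j))%:Z *
     binomZ ((t.+1)%:Z * (b%:Z - j%:Z) + a%:Z + c - 1) ((a + b)%:Z - 1).

(* Main.v *)
Require Import Defs.
From mathcomp Require Import all_boot all_order all_algebra.
From mathcomp Require Import boolp reals Rstruct.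
From mathcomp Require Import zify ring.
Set Implicit Arguments. Unset Strict Implicit. Unset Printing Implicit Defensive.
Import GRing.Theory Num.Theory.


Lemma sorted_vals n (T : {set 'I_n}) : sorted ltn (map val (enum T)).
Proof.
apply: (subseq_sorted ltn_trans _ (iota_ltn_sorted 0 n)).
rewrite -val_enum_ord; apply: map_subseq.
rewrite enumT; exact: filter_subseq.
Qed.

Lemma sorted_elemsE n (T : {set 'I_n}) : sorted_elems T = map val (enum T).
Proof.
rewrite /sorted_elems sorted_sort //; first exact: leq_trans.
apply: (sub_sorted _ (sorted_vals T)) => x y; exact: ltnW.
Qed.

Lemma sorted_head_le (x v : nat) s : sorted ltn (x :: s) -> v \in x :: s -> x <= v.
Proof.
move=> /= /(order_path_min ltn_trans) /allP H; rewrite inE => /orP[/eqP->//|/H].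
exact: ltnW.
Qed.

Lemma sorted_size_bound n (y : nat) s : sorted ltn (y :: s) -> all (fun v => v < n) (y :: s) ->
  y + size (y :: s) <= n.
Proof.
elim: s y => [|z s IH] y /=; first by rewrite andbT addn1.
move=> /andP[yz Hs] /andP[yn Hall].
have := IH z Hs Hall => /=; lia.
Qed.

Lemma all2_tail n s : sorted ltn s -> all (fun v => v < n) s ->
  all2 leq s (iota (n - size s) (size s)).
Proof.
elim: s => [|y s IH] //= Hs /andP[yn Hall].
have Hb := sorted_size_bound Hs (introT andP (conj yn Hall)).
simpl in Hb.
have -> : (n - (size s).+1).+1 = n - size s by lia.
apply/andP; split; [lia|].
exact: (IH (path_sorted Hs) Hall).
Qed.

Lemma mem_vals n (B : {set 'I_n}) v :
  (v \in map val (enum B)) = [exists j : 'I_n, (j \in B) && (val j == v)].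
Proof.
apply/mapP/existsP => [[j Hj ->]|[j /andP[Hj /eqP <-]]].
  by exists j; rewrite -mem_enum Hj eqxx.
by exists j; rewrite ?mem_enum.
Qed.

Lemma gale_S n c (S : {set 'I_n}) : c.+2 <= n ->
  (forall i : 'I_n, (i \in S) = (val i == 1) || (n - c <= i)) ->
  forall B : {set 'I_n},
  gale_le B S = (#|B| == c.+1) && [exists j : 'I_n, (j < 2) && (j \in B)].
Proof.
move=> Hc HSdef B.
have HS : map val (enum S) = 1 :: iota (n - c) c.
  apply: (irr_sorted_eq ltn_trans ltnn (sorted_vals S)).
    case: c Hc {HSdef} => //= c' Hc.
    apply/andP; split; [lia| exact: (iota_ltn_sorted (n - c'.+1) c'.+1)].
  move=> v; rewrite mem_vals inE mem_iota; apply/existsP/idP.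
    case=> j /andP[]; rewrite HSdef => Hj /eqP <-; have := ltn_ord j; case: eqP Hj => [->|_] /= Hj; lia.
  move=> Hv; have vlt : (v : nat) < n by case: eqP Hv => [->|_] /= Hv; lia.
  by exists (Ordinal vlt); rewrite HSdef /=; case: eqP Hv => [->|_] //= Hv; rewrite eqxx andbT; lia.
rewrite /gale_le !sorted_elemsE HS.
have -> : #|S| = c.+1 by rewrite cardE -(size_map val) HS /= size_iota.
case: eqP => HB //=.
have Hs := sorted_vals B.
have Hsz : size (map val (enum B)) = c.+1 by rewrite size_map -cardE.
have Hlt : all (fun v => v < n) (map val (enum B)).
  by apply/allP => v; rewrite mem_vals => /existsP[j /andP[_ /eqP <-]]; exact: ltn_ord.
have Hmem := mem_vals B.
case E: (map val (enum B)) Hs Hsz Hlt Hmem => [|x xs] //= Hs [Hsz] /andP[_ Hall] Hmem.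
have := all2_tail (path_sorted Hs) Hall; rewrite Hsz => ->; rewrite andbT.
apply/idP/existsP.
  move=> x1; have := Hmem x; rewrite inE eqxx /= => /esym /existsP[j /andP[jB /eqP jx]].
  by exists j; rewrite jB jx andbT; lia.
case=> j /andP[j2 jB].
have : val j \in x :: xs by rewrite Hmem; apply/existsP; exists j; rewrite jB eqxx.
move=> /(sorted_head_le Hs); move=> h; apply: leq_trans h _; exact: j2.
Qed.

Lemma nth_word p q i :
  nth false (false :: true :: nseq p false ++ (nseq q true ++ [::])) i
  = (i == 1) || (p.+2 <= i < p + q + 2).
Proof.
case: i => [|[|i]] //=.
rewrite cats0 nth_cat size_nseq nth_nseq.
case: ltnP => H1; first by (apply/esym/negbTE; lia).
rewrite nth_nseq; case: ltnP => H2; [apply/esym; lia | apply/esym/negbTE; lia].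
Qed.

Lemma rset_mem p q (i : 'I_(sumn [:: 1; 1; p; q])) :
  (i \in r_set [:: 1; 1; p; q]) = (val i == 1) || (sumn [:: 1; 1; p; q] - q <= i).
Proof.
rewrite /r_set inE /r_word /= nth_word.
have := ltn_ord i; rewrite /=.
case: eqP => //= _; lia.
Qed.

Lemma sum_ltn t r : r <= t -> \sum_(i < t) (i < r : nat) = r.
Proof.
move=> rt.
have := @big_ord_widen nat 0 addn r t (fun _ => 1) rt.
rewrite sum_nat_const card_ord muln1 => H.
rewrite [RHS]H [RHS]big_mkcond /=; apply: eq_bigr => i _; by case: (i < r).
Qed.

Definition fi (t i P : nat) := (P + t.-1 - i) %/ t.

Lemma hermite t P : 0 < t -> \sum_(i < t) fi t i P = P.
Proof.
move=> t0; rewrite /fi.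
have Hr : P %% t < t by rewrite ltn_mod.
have E : forall i : 'I_t, (P + t.-1 - i) %/ t = P %/ t + (i < P %% t).
  move=> i; have it := ltn_ord i.
  have -> : P + t.-1 - i = P %/ t * t + (P %% t + t.-1 - i).
    by rewrite {1}(divn_eq P t); lia.
  rewrite divnMDl //; congr (_ + _).
  case: ltnP => H.
    have -> : P %% t + t.-1 - i = 1 * t + (P %% t - i.+1) by lia.
    rewrite divnMDl // divn_small //; lia.
  by rewrite divn_small //; lia.
rewrite (eq_bigr _ (fun i _ => E i)) big_split /= sum_nat_const card_ord.
rewrite sum_ltn; last by apply: ltnW.
by rewrite mulnC -divn_eq.
Qed.

Lemma fi_mono t i P Q : P <= Q -> fi t i P <= fi t i Q.
Proof. by move=> H; rewrite /fi; apply: leq_div2r; lia. Qed.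

Lemma fi_step t i P y : 0 < t -> y <= t -> fi t i (P + y) <= (fi t i P).+1.
Proof.
move=> t0 yt; rewrite /fi.
apply: (@leq_trans ((1 * t + (P + t.-1 - i)) %/ t)).
  apply: leq_div2r; lia.
by rewrite divnMDl // add1n.
Qed.

Lemma fi0 t i : i < t -> fi t i 0 = 0.
Proof. by move=> it; rewrite /fi divn_small //; lia. Qed.

Lemma fitk t i k : i < t -> fi t i (t * k) = k.
Proof.
move=> it; rewrite /fi.
have -> : t * k + t.-1 - i = k * t + (t.-1 - i) by lia.
rewrite divnMDl ?divn_small; lia.
Qed.

Lemma fit t i P : i < t -> t <= P -> 1 <= fi t i P.
Proof.
move=> it tP; apply: (@leq_trans (fi t i (t * 1))); last by apply: fi_mono; lia.
by rewrite fitk.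
Qed.

Definition yv n (x : 'I_n -> nat) (l : nat) : nat :=
  if insub l is Some o then x o else 0.

Lemma yvE n (x : 'I_n -> nat) (o : 'I_n) : yv x o = x o.
Proof. by rewrite /yv valK. Qed.

Definition pre n (x : 'I_n -> nat) p := \sum_(l < p) yv x l.

Lemma preS n (x : 'I_n -> nat) p : pre x p.+1 = pre x p + yv x p.
Proof. by rewrite /pre big_ord_recr. Qed.

Definition Bs n (x : 'I_n -> nat) t (i : nat) : {set 'I_n} :=
  [set j : 'I_n | fi t i (pre x j) < fi t i (pre x j.+1)].

Lemma yv_le n (x : 'I_n -> nat) t : (forall j, x j <= t) -> forall l, yv x l <= t.
Proof. by move=> H l; rewrite /yv; case: insub. Qed.

Lemma Bs_ind n (x : 'I_n -> nat) t i (j : 'I_n) : 0 < t -> (forall j, x j <= t) ->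
  (j \in Bs x t i : nat) = fi t i (pre x j.+1) - fi t i (pre x j).
Proof.
move=> t0 Hx; rewrite inE preS.
have h1 := fi_step i (pre x j) t0 (yv_le Hx j).
have h2 := @fi_mono t i (pre x j) (pre x j + yv x j) (leq_addr _ _).
case: ltnP => H /=; lia.
Qed.

Lemma tele n (x : 'I_n -> nat) t i p :
  \sum_(l < p) (fi t i (pre x l.+1) - fi t i (pre x l)) = fi t i (pre x p) - fi t i (pre x 0).
Proof.
rewrite -(big_mkord xpredT (fun l => fi t i (pre x l.+1) - fi t i (pre x l))).
apply: telescope_sumn_in => // l _; apply: fi_mono; rewrite preS; exact: leq_addr.
Qed.

Lemma card_sum (T : finType) (A : {set T}) : #|A| = \sum_j (j \in A : nat).
Proof.
by rewrite -sum1_card big_mkcond /=; apply: eq_bigr => j _; case: (j \in A).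
Qed.

Lemma pre0 n (x : 'I_n -> nat) : pre x 0 = 0.
Proof. by rewrite /pre big_ord0. Qed.

Lemma pren n (x : 'I_n -> nat) : pre x n = \sum_j x j.
Proof. by rewrite /pre; apply: eq_bigr => j _; rewrite yvE. Qed.

Lemma pre2 n (x : 'I_n -> nat) : 2 <= n -> pre x 2 = \sum_(j < n | j < 2) x j.
Proof.
move=> n2; rewrite /pre (big_ord_widen n (yv x) n2); apply: eq_bigr => j _; by rewrite yvE.
Qed.

Lemma Bs_card n (x : 'I_n -> nat) t k i : 0 < t -> i < t -> (forall j, x j <= t) ->
  \sum_j x j = t * k -> #|Bs x t i| = k.
Proof.
move=> t0 it Hx Hs; rewrite card_sum (eq_bigr _ (fun j _ => Bs_ind i j t0 Hx)).
by rewrite tele pre0 fi0 // subn0 pren Hs fitk.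
Qed.

Lemma Bs_two n (x : 'I_n -> nat) t i : 0 < t -> i < t -> (forall j, x j <= t) -> 2 <= n ->
  t <= \sum_(j < n | j < 2) x j -> [exists j : 'I_n, (j < 2) && (j \in Bs x t i)].
Proof.
move=> t0 it Hx n2 H2.
have E : \sum_(j < n | j < 2) (j \in Bs x t i : nat) = fi t i (pre x 2).
  rewrite (eq_bigr _ (fun j _ => Bs_ind i j t0 Hx)).
  rewrite -(big_ord_widen n (fun l => fi t i (pre x l.+1) - fi t i (pre x l)) n2).
  by rewrite tele pre0 fi0 // subn0.
have : 0 < \sum_(j < n | j < 2) (j \in Bs x t i : nat).
  by rewrite E; apply: fit => //; rewrite pre2.
rewrite lt0n sum_nat_eq0 negb_forall => /existsP[j]; rewrite negb_imply => /andP[j2 jB].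
by apply/existsP; exists j; rewrite j2; case: (j \in Bs x t i) jB.
Qed.

Lemma Bs_cover n (x : 'I_n -> nat) t (j : 'I_n) : 0 < t -> (forall j, x j <= t) ->
  \sum_(i < t) (j \in Bs x t i : nat) = x j.
Proof.
move=> t0 Hx; rewrite (eq_bigr (fun i : 'I_t => fi t i (pre x j.+1) - fi t i (pre x j)) (fun i _ => Bs_ind (nat_of_ord i) j t0 Hx)).
rewrite sumnB; last by move=> i _; apply: fi_mono; rewrite preS leq_addr.
by rewrite !hermite // preS yvE addKn.
Qed.

Definition isB2 n k (B : {set 'I_n}) :=
  (#|B| == k) && [exists j : 'I_n, (j < 2) && (j \in B)].

Local Notation RR := Rdefinitions.R.

Lemma big_isB n (isB : {set 'I_n} -> bool) (f : {set 'I_n} -> RR) :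
  (forall B, ~~ isB B -> f B = 0%R) ->
  (\sum_(B | isB B) f B = \sum_B f B)%R.
Proof.
move=> H; rewrite big_mkcond /=; apply: eq_bigr => B _.
by case: (boolP (isB B)) => // /H ->.
Qed.

Lemma sum_dilate n (isB : {set 'I_n} -> bool) t (x : 'I_n -> nat) (lam : {set 'I_n} -> RR)
  (P : pred 'I_n) :
  (forall j : 'I_n,
        ((x j)%:R = t%:R * \sum_(B : {set 'I_n} | isB B) lam B * (j \in B)%:R :> RR)%R) ->
  (((\sum_(j | P j) x j)%N)%:R =
     t%:R * \sum_(B | isB B) lam B * ((\sum_(j | P j) (j \in B : nat))%N)%:R :> RR)%R.
Proof.
move=> H4; rewrite natr_sum.
under eq_bigr do rewrite H4.
rewrite -mulr_sumr exchange_big /=; congr (_ * _)%R; apply: eq_bigr => B _.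
by rewrite -mulr_sumr natr_sum.
Qed.

Lemma dilate_iff n k t (x : 'I_n -> nat) (isB : {set 'I_n} -> bool) :
  2 <= n -> 0 < t -> (forall j, x j <= t) -> isB =1 isB2 k ->
  in_dilate isB t x <-> (\sum_j x j = t * k) /\ (t <= \sum_(j < n | j < 2) x j).
Proof.
move=> n2 t0 Hx HisB; split.
  case=> lam [H1 [H2 [H3 H4]]].
  have E1 : (\sum_(B | isB B) lam B = 1)%R.
    by rewrite -H3; apply: big_isB => B /H2.
  split.
    apply/eqP; rewrite -(eqr_nat RR) (sum_dilate predT H4).
    rewrite (eq_bigr (fun B => lam B * k%:R)%R); last first.
      move=> B; rewrite HisB => /andP[/eqP <- _]; congr (_ * _)%R.
      by rewrite card_sum.
    by rewrite -mulr_suml E1 mul1r natrM.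
  rewrite -(ler_nat RR) (sum_dilate (fun j : 'I_n => j < 2) H4).
  rewrite -[X in (X <= _)%R]mulr1 -[X in (_ * X <= _)%R]E1.
  apply: ler_wpM2l; first by apply: ler0n.
  apply: ler_sum => B; rewrite HisB => /andP[_ /existsP[j /andP[j2 jB]]].
  rewrite -[X in (X <= _)%R]mulr1; apply: ler_wpM2l; first exact: H1.
  rewrite ler1n lt0n sum_nat_eq0 negb_forall; apply/existsP; exists j.
  by rewrite j2 jB.
case=> Hs H2.
have HBs : forall i : 'I_t, isB (Bs x t i).
  by move=> i; rewrite HisB /isB2 (@Bs_card n x t k i t0 (ltn_ord i) Hx Hs) eqxx /= (@Bs_two n x t i t0 (ltn_ord i) Hx n2 H2).
exists (fun B => t%:R^-1 * \sum_(i < t) (Bs x t i == B)%:R)%R.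
have t0R : (t%:R != 0 :> RR)%R by rewrite pnatr_eq0 -lt0n.
have inner : forall (i : 'I_t) (g : {set 'I_n} -> RR),
    (\sum_B (Bs x t i == B)%:R * g B = g (Bs x t i))%R.
  move=> i g; rewrite (bigD1 (Bs x t i)) //= eqxx mul1r big1 ?addr0 //.
  by move=> B /negbTE; rewrite eq_sym => ->; rewrite mul0r.
split.
  move=> B; apply: mulr_ge0; first by rewrite invr_ge0 ler0n.
  by apply: sumr_ge0 => i _; apply: ler0n.
split.
  move=> B HB; rewrite big1 ?mulr0 // => i _.
  by case: eqP => // E; move: HB; rewrite -E HBs.
split.
  rewrite -mulr_sumr exchange_big /=.
  rewrite (eq_bigr (fun _ => 1%R)); last first.
    move=> i _; rewrite -[RHS](inner i (fun _ => 1%R)); apply: eq_bigr => B _; by rewrite mulr1.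
  by rewrite sumr_const card_ord mulVf.
move=> j.
rewrite big_isB; last first.
  move=> B HB; rewrite big1 ?mulr0 ?mul0r // => i _.
  by case: eqP => // E; move: HB; rewrite -E HBs.
under eq_bigr do rewrite -mulrA mulr_suml.
rewrite -mulr_sumr exchange_big /=.
under eq_bigr do rewrite (inner _ (fun B => (j \in B)%:R)%R).
by rewrite -natr_sum Bs_cover // mulrA mulfV // mul1r.
Qed.

Definition consf (T : Type) m (u : T) (g : {ffun 'I_m -> T}) : {ffun 'I_m.+1 -> T} :=
  [ffun i : 'I_m.+1 => if unlift ord0 i is Some j then g j else u].

Lemma consf0 (T : Type) m (u : T) (g : {ffun 'I_m -> T}) : consf u g ord0 = u.
Proof. by rewrite /consf ffunE unlift_none. Qed.

Lemma consfS (T : Type) m (u : T) (g : {ffun 'I_m -> T}) j : consf u g (lift ord0 j) = g j.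
Proof. by rewrite /consf ffunE liftK. Qed.

Lemma sum_ffunS (T : finType) m (F : {ffun 'I_m.+1 -> T} -> nat) :
  \sum_f F f = \sum_(u : T) \sum_(g : {ffun 'I_m -> T}) F (consf u g).
Proof.
rewrite pair_big /=.
rewrite (reindex (fun p : T * {ffun 'I_m -> T} => consf p.1 p.2)) /=; last first.
  exists (fun f : {ffun 'I_m.+1 -> T} => (f ord0, [ffun j => f (lift ord0 j)])).
    move=> [u g] _ /=; rewrite consf0; congr (_, _); apply/ffunP => j.
    by rewrite ffunE consfS.
  move=> f _ /=; apply/ffunP => i; rewrite /consf ffunE.
  by case: unliftP => [j ->|->]; rewrite ?ffunE.
by apply: eq_bigl.
Qed.

Lemma sum_consf t m (u : 'I_t.+1) (g : {ffun 'I_m -> 'I_t.+1}) :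
  \sum_i (consf u g i : nat) = u + \sum_i (g i : nat).
Proof.
rewrite big_ord_recl consf0; congr (_ + _); apply: eq_bigr => i _; by rewrite consfS.
Qed.

Lemma sum2_consf t m (u v : 'I_t.+1) (g : {ffun 'I_m -> 'I_t.+1}) :
  \sum_(i < m.+2 | i < 2) (consf u (consf v g) i : nat) = u + v.
Proof.
rewrite big_mkcond big_ord_recl /= consf0 big_ord_recl /=.
by rewrite /bump /= consfS consf0 big1 ?addn0 // => i _.
Qed.

Definition Wc t m s := \sum_(f : {ffun 'I_m -> 'I_t.+1}) (\sum_i (f i : nat) == s : nat).

Lemma Wc0 t s : Wc t 0 s = (s == 0 : nat).
Proof.
rewrite /Wc (eq_bigr (fun _ => (0 == s : nat))); last by move=> f _; rewrite big_ord0.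
rewrite sum_nat_const card_ffun !card_ord mul1n; by rewrite eq_sym.
Qed.

Lemma WcS t m s : Wc t m.+1 s = \sum_(u < t.+1) (u <= s) * Wc t m (s - u).
Proof.
rewrite /Wc sum_ffunS; apply: eq_bigr => u _; rewrite big_distrr /=.
apply: eq_bigr => g _; rewrite sum_consf.
case: (leqP u s) => H /=; rewrite ?mul1n ?mul0n.
  by congr (nat_of_bool _); apply/eqP/eqP; lia.
by case: eqP => //; lia.
Qed.

Definition Cnt N t s := #|[set x : {ffun 'I_N -> 'I_t.+1} |
   (\sum_j (x j : nat) == s) && (t <= \sum_(j < N | j < 2) (x j : nat))]|.

Lemma Cnt_dec m t s : Cnt m.+2 t s =
  \sum_(u < t.+1) \sum_(v < t.+1) (t <= u + v) * ((u + v <= s) * Wc t m (s - (u + v))).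
Proof.
rewrite /Cnt card_sum sum_ffunS; apply: eq_bigr => u _.
rewrite sum_ffunS; apply: eq_bigr => v _.
rewrite /Wc !big_distrr /=; apply: eq_bigr => g _.
rewrite inE sum2_consf !sum_consf.
case: (leqP t (u + v)) => H1; rewrite ?mul1n ?mul0n ?andbF //= andbT.
case: (leqP (u + v) s) => H2 /=; rewrite ?mul1n ?mul0n.
  by congr (nat_of_bool _); apply/eqP/eqP; lia.
by case: eqP => //; lia.
Qed.

Definition compf t m (f : {ffun 'I_m -> 'I_t.+1}) : {ffun 'I_m -> 'I_t.+1} :=
  [ffun i => rev_ord (f i)].

Lemma compfK t m : cancel (@compf t m) (@compf t m).
Proof. by move=> f; apply/ffunP => i; rewrite !ffunE rev_ordK. Qed.

Lemma sum_le t m (f : {ffun 'I_m -> 'I_t.+1}) : \sum_i (f i : nat) <= t * m.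
Proof.
rewrite -[m in t * m]card_ord mulnC -sum_nat_const; apply: leq_sum => i _.
by rewrite -ltnS.
Qed.

Lemma sum_compf t m (f : {ffun 'I_m -> 'I_t.+1}) :
  \sum_i (compf f i : nat) = t * m - \sum_i (f i : nat).
Proof.
rewrite (eq_bigr (fun i => t - f i)); last by move=> i _; rewrite ffunE /=; lia.
rewrite sumnB; last by move=> i _; rewrite -ltnS.
by rewrite sum_nat_const card_ord mulnC.
Qed.

Lemma Wc_sym t m s : s <= t * m -> Wc t m s = Wc t m (t * m - s).
Proof.
move=> Hs; rewrite /Wc (reindex_inj (can_inj (@compfK t m))) /=.
apply: eq_bigr => f _; rewrite sum_compf.
have := sum_le f; move=> Hf.
have E : \sum_(i < m) (f i : nat) = \sum_i (f i : nat) by []. rewrite E; move: (\sum_i (f i : nat)) Hf => S HS. by apply/eqP/eqP; lia.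
Qed.

Lemma inner1 t u (g : nat -> nat) : u <= t ->
  \sum_(v < t.+1) (t <= u + v) * g (u + v - t) = \sum_(w < u.+1) g w.
Proof.
move=> ut.
rewrite -(big_mkord xpredT (fun v => (t <= u + v) * g (u + v - t))).
rewrite -(big_mkord xpredT g).
rewrite (@big_cat_nat _ _ _ (t - u)) //=; last lia.
rewrite big_nat_cond big1 ?add0n; last first.
  move=> v /andP[/andP[_ Hv] _]; have -> : (t <= u + v) = false by lia.
  by rewrite mul0n.
rewrite -{1}[t - u]add0n big_addn.
have -> : t.+1 - (t - u) = u.+1 by lia.
apply: eq_big_nat => v Hv.
have -> : u + (v + (t - u)) - t = v by lia.
have -> : (t <= u + (v + (t - u))) = true by lia.
by rewrite mul1n.
Qed.

Lemma inner2 t u (g : nat -> nat) : u <= t ->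
  \sum_(v < t.+1) (u + v <= t) * g (u + v) = \sum_(u <= w < t.+1) g w.
Proof.
move=> ut.
rewrite -(big_mkord xpredT (fun v => (u + v <= t) * g (u + v))).
rewrite (@big_cat_nat _ _ _ (t - u).+1) //=; last lia.
rewrite [X in _ + X = _]big_nat_cond [X in _ + X = _]big1 ?addn0; last first.
  move=> v /andP[/andP[Hv _] _]; have -> : (u + v <= t) = false by lia.
  by rewrite mul0n.
have -> : \sum_(u <= w < t.+1) g w = \sum_(0 <= i < t.+1 - u) g (i + u).
  by rewrite -{1}[u]add0n big_addn.
have -> : t.+1 - u = (t - u).+1 by lia.
apply: eq_big_nat => v Hv.
have -> : (u + v <= t) = true by lia.
by rewrite mul1n addnC.
Qed.

Lemma pair_id t (g : nat -> nat) :
  \sum_(u < t.+1) \sum_(v < t.+1) (t <= u + v) * g (u + v - t) +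
  \sum_(u < t.+1) \sum_(v < t.+1) (u + v <= t) * g (u + v) =
  t.+2 * \sum_(w < t.+1) g w.
Proof.
rewrite -big_split /=.
rewrite (eq_bigr (fun u : 'I_t.+1 => \sum_(w < t.+1) g w + g u)); last first.
  move=> u _; have ut : u <= t by rewrite -ltnS.
  rewrite inner1 // inner2 //.
  rewrite -!(big_mkord xpredT g) big_nat_recr //=.
  rewrite (@big_cat_nat _ _ _ u 0 t.+1) //=; last lia.
  by rewrite addnAC.
by rewrite big_split /= sum_nat_const card_ord mulSn addnC.
Qed.

Section P7sec.
Local Open Scope ring_scope.


Lemma binomZ_small (N K : int) : 0 <= K -> N < K -> binomZ N K = 0.
Proof. by move=> K0 NK; rewrite /binomZ NK orbT. Qed.

Lemma binomZ0 (N : int) : binomZ N 0 = if N < 0 then 0 else 1.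
Proof. by rewrite /binomZ /= bin0. Qed.

Lemma binomZ_pascal (N : int) (K : nat) :
  binomZ (N + 1) K.+1 = binomZ N K.+1 + binomZ N K.
Proof.
case: (ltrP N 0) => HN.
  rewrite !binomZ_small //; lia.
have [n ->] : exists n : nat, N = n%:Z by exists `|N|%N; lia.
rewrite /binomZ /=.
case: (ltngtP n K) => H1.
- rewrite ifT; last lia. rewrite ifT; last lia. rewrite ifT; last lia. by [].
- rewrite ifF; last lia. rewrite ifF; last lia. rewrite ifF; last lia.
  by rewrite addn1 binS PoszD addrC.
- rewrite ifF; last lia. rewrite ifT; last lia. rewrite ifF; last lia.
  by rewrite H1 addn1 binS bin_small // addr0 add0r.
Qed.

Lemma hockey (N : int) (K t : nat) :
  \sum_(w < t.+1) binomZ (N - w%:Z) K = binomZ (N + 1) K.+1 - binomZ (N - t%:Z) K.+1.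
Proof.
elim: t => [|t IH].
  by rewrite big_ord1 /= subr0 binomZ_pascal addrAC subrr add0r.
rewrite big_ord_recr /= IH.
have -> : N - t%:Z = (N - t.+1%:Z) + 1 by rewrite -addn1 PoszD; ring.
by rewrite (binomZ_pascal (N - t.+1%:Z)); ring.
Qed.

Definition Gf (t m : nat) (s : int) : int :=
  \sum_(j < m.+1) (-1) ^+ j * ('C(m, j))%:Z *
     binomZ (s + m%:Z - 1 - (j * t.+1)%:Z) (m%:Z - 1).

Lemma Gf_neg t m (s : int) : s < 0 -> Gf t m.+1 s = 0.
Proof.
move=> s0; rewrite /Gf big1 // => j _; rewrite binomZ_small ?mulr0 //; lia.
Qed.

Lemma GfS t m (s : int) : \sum_(w < t.+1) Gf t m.+1 (s - w%:Z) = Gf t m.+2 s.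
Proof.
pose T := fun j : nat => binomZ (s + m.+1%:Z - (j * t.+1)%:Z) m.+1%:Z.
have LE : \sum_(w < t.+1) Gf t m.+1 (s - w%:Z) =
    \sum_(j < m.+2) (-1) ^+ j * ('C(m.+1, j))%:Z * (T j - T j.+1).
  rewrite /Gf exchange_big /=; apply: eq_bigr => j _; rewrite -mulr_sumr; congr (_ * _).
  have H := hockey (s + m%:Z - (j * t.+1)%:Z) m t.
  transitivity (\sum_(w < t.+1) binomZ (s + m%:Z - (j * t.+1)%:Z - w%:Z) m).
    apply: eq_bigr => w _; congr binomZ; rewrite !(PoszM, PoszD, intS); ring.
  rewrite H /T; congr (binomZ _ _ - binomZ _ _); rewrite !(PoszM, PoszD, intS); ring.
have RE : Gf t m.+2 s = \sum_(j < m.+3) (-1) ^+ j * ('C(m.+2, j))%:Z * T j.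
  apply: eq_bigr => j _; congr (_ * binomZ _ _); rewrite /T !(PoszM, PoszD, intS); ring.
rewrite LE RE.
under eq_bigr do rewrite mulrBr.
rewrite sumrB big_ord_recl [RHS]big_ord_recl /=.
under [in RHS]eq_bigr do rewrite /bump /= binS PoszD mulrDr mulrDl.
rewrite big_split /=.
rewrite [X in _ = _ + (X + _)]big_ord_recr /= (bin_small (ltnSn m.+1)) mulr0 mul0r addr0.
have -> : \sum_(i < m.+2) (-1) ^+ i * ('C(m.+1, i))%:Z * T i.+1 =
   - \sum_(i < m.+2) (-1) ^+ i.+1 * ('C(m.+1, i))%:Z * T i.+1.
  rewrite -sumrN; apply: eq_bigr => i _; rewrite exprS; ring.
rewrite !bin0 opprK.
under eq_bigr do rewrite /bump /= add1n.
under [X in _ = _ + (_ + X)]eq_bigr do rewrite add1n.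
by rewrite addrA.
Qed.

Lemma sum_eqs t s : (\sum_(u < t.+1) (u == s :> nat) = (s <= t))%N.
Proof.
case: (ltnP s t.+1) => Hs.
  rewrite (bigD1 (Ordinal Hs)) //= eqxx big1 ?addn0 //=; last first.
    by move=> u /negbTE; rewrite -(inj_eq val_inj) /= => ->.
  by rewrite -ltnS Hs.
rewrite big1 //=; first by rewrite -ltnS ltnNge Hs.
move=> u _; have := ltn_ord u; case: eqP => //= ->; lia.
Qed.

Lemma Wc_Gf t m s : (Wc t m.+1 s)%:Z = Gf t m.+1 s%:Z.
Proof.
elim: m s => [|m IH] s.
  rewrite WcS.
  rewrite (eq_bigr (fun u : 'I_t.+1 => (val u == s : nat))); last first.
    by move=> u _; rewrite Wc0; case: (leqP u s) => H /=; case: eqP; case: eqP => //; lia.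
  rewrite sum_eqs /Gf big_ord_recr big_ord1 /= subrr !binomZ0.
  case: (leqP s t) => H; [rewrite ifF; [|lia]; rewrite ifT; [|lia] | rewrite ifF; [|lia]; rewrite ifF; [|lia]]; by rewrite ?H /= ?(leqNgt, H).
rewrite WcS -GfS (big_morph Posz PoszD (erefl _)); apply: eq_bigr => u _.
case: (leqP u s) => H.
  by rewrite mul1n IH -subzn.
by rewrite mul0n Gf_neg //; lia.
Qed.

End P7sec.

Lemma ehr_Cnt n c (S : {set 'I_n}) t : c.+2 <= n -> 0 < t ->
  (forall i : 'I_n, (i \in S) = (val i == 1) || (n - c <= i)) ->
  ehrhart_count (schubert_basis S) t = Cnt n t (t * c.+1).
Proof.
move=> Hc t0 HS; rewrite /ehrhart_count /Cnt; apply: eq_card => x; rewrite !inE.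
have n2 : 2 <= n by lia.
have Hx : forall j, (fun j => nat_of_ord (x j)) j <= t by move=> j /=; rewrite -ltnS.
have HisB : schubert_basis S =1 isB2 c.+1 by move=> B; rewrite /schubert_basis (gale_S Hc HS).
have Hd := dilate_iff n2 t0 Hx HisB.
apply/asboolP/andP.
  by move=> /Hd [H1 H2]; split; [apply/eqP|].
by case=> /eqP H1 H2; apply/Hd.
Qed.

Lemma ir1 a b t : 0 < t ->
  i_r [:: 1; 1; a; b] t = Cnt (a + b).+2 t (t * b.+1).
Proof.
move=> t0; rewrite /i_r /i_schubert (@ehr_Cnt _ b) //.
- by congr Cnt; rewrite /=; lia.
- by rewrite /=; lia.
- by move=> i; rewrite rset_mem.
Qed.

Lemma ir2 a b t : 0 < t -> 1 <= b ->
  i_r [:: 1; 1; b.-1; a.+1] t = Cnt (a + b).+2 t (t * a.+2).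
Proof.
move=> t0 b1; rewrite /i_r /i_schubert (@ehr_Cnt _ a.+1) //.
- by congr Cnt; rewrite /=; lia.
- by rewrite /=; lia.
- by move=> i; rewrite rset_mem.
Qed.

Lemma T1_eq a b t : 1 <= b ->
  Cnt (a + b).+2 t (t * b.+1) =
  \sum_(u < t.+1) \sum_(v < t.+1) (t <= u + v) * (fun w => Wc t (a + b) (t * b - w)) (u + v - t).
Proof.
move=> b1; rewrite Cnt_dec; apply: eq_bigr => u _; apply: eq_bigr => v _ /=.
have hu := ltn_ord u; have hv := ltn_ord v.
have tb : t <= t * b by rewrite leq_pmulr.
rewrite mulnS; move: (t * b) tb => TB tb.
case: (leqP t (u + v)) => H; rewrite ?mul0n ?mul1n //.
have -> : (u + v <= t + TB) = true by lia.
by rewrite mul1n; congr Wc; lia.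
Qed.

Lemma T2_eq a b t : 1 <= b ->
  Cnt (a + b).+2 t (t * a.+2) =
  \sum_(u < t.+1) \sum_(v < t.+1) (u + v <= t) * (fun w => Wc t (a + b) (t * b - w)) (u + v).
Proof.
move=> b1; rewrite Cnt_dec (reindex_inj rev_ord_inj); apply: eq_bigr => u _.
rewrite (reindex_inj rev_ord_inj); apply: eq_bigr => v _ /=.
have hu := ltn_ord u; have hv := ltn_ord v.
have tb : t <= t * b by rewrite leq_pmulr.
case: (leqP (u + v) t) => H.
  have -> : (t <= t.+1 - u.+1 + (t.+1 - v.+1)) = true by lia.
  rewrite mul1n.
  have -> : (t.+1 - u.+1 + (t.+1 - v.+1) <= t * a.+2) = true.
    rewrite !mulnS; lia.
  rewrite mul1n Wc_sym; last by rewrite !mulnS mulnDr; lia.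
  rewrite mul1n; congr Wc; rewrite !mulnS mulnDr; lia.
have -> : (t <= t.+1 - u.+1 + (t.+1 - v.+1)) = false by lia.
by rewrite !mul0n.
Qed.

Lemma F_Gf a b t : F a.+1 b 0 t = Gf t (a + b).+1 (t * b)%:Z.
Proof.
rewrite /F /Gf addSn; apply: eq_bigr => j _; congr (_ * binomZ _ _)%R;
  rewrite !(PoszM, PoszD, intS); ring.
Qed.

Theorem main_nat a b t : 1 <= a -> 2 <= b -> 0 < t ->
  i_r [:: 1; 1; a; b] t + i_r [:: 1; 1; b.-1; a.+1] t = t.+2 * Wc t (a + b).+1 (t * b).
Proof.
move=> a1 b2 t0.
have b1 : 1 <= b by lia.
rewrite ir1 // ir2 // T1_eq // T2_eq // (pair_id t (fun w => Wc t (a + b) (t * b - w))) WcS; congr (_ * _).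
apply: eq_bigr => w _; have := ltn_ord w.
have tb : t <= t * b by rewrite leq_pmulr.
move=> hw; have -> : (w <= t * b) = true by lia.
by rewrite mul1n.
Qed.

Local Open Scope ring_scope.

Theorem corollary4p3 (a b t : nat) :
  (1 <= a)%N -> (2 <= b)%N -> (0 < t)%N ->
  ((i_r [:: 1; 1; a; b]%N t + i_r [:: 1; 1; b.-1; a.+1]%N t)%N)%:Z
    = (t.+2)%:Z * F a.+1 b 0 t.
Proof.
move=> a1 b2 t0.
by rewrite main_nat // PoszM Wc_Gf F_Gf.
Qed.
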